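(* Let $\boldsymbol\mu\in\mathbb R^N$ with $\boldsymbol\mu\geq\mathbf 0$. There exists a power vector $\mathbf p^*\in\mathbb R^N$, $\mathbf p^*\geq\mathbf 0$, with $\Gamma(\mathbf p^* )=\boldsymbol\mu$ if and only if there exists a power vector $\mathbf p'\in\mathbb R^N$, $\mathbf p'\geq\mathbf 0$, with $\Gamma(\mathbf p')\geq\boldsymbol\mu$.
   Context: Multicast system: $N\geq 2$ transmitters $T_1,\dots,T_N$; transmitter $T_i$ has $K_i\geq 1$ receivers $R_i^{k}$, $k\in\mathcal K_i=\{1,\dots,K_i\}$. The channel gain from $T_j$ to $R_i^{k}$ is $g_{r_i^{k},t_j}\geq 0$, with direct gains $g_{r_i^{k},t_i}>0$; the noise variance is $\sigma^2>0$. For $\mathbf p=(p_1,\dots,p_N)^T\geq\mathbf 0$ the SINR of $R_i^k$ is $\gamma_i^{k}(\mathbf p)=\frac{g_{r_i^{k},t_i}p_i}{\sum_{j\neq i}g_{r_i^{k},t_j}p_j+\sigma^2}$, the SINR of session $i$ is $\gamma_i(\mathbf p)=\min_{k\in\mathcal K_i}\gamma_i^{k}(\mathbf p)$, and $\Gamma(\mathbf p)=(\gamma_1(\mathbf p),\dots,\gamma_N(\mathbf p))$. Vector inequalities are componentwise. *)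

(* Defs.v *)
From Stdlib Require Import Reals List.
Open Scope R_scope.

(* Transmitters are indexed by i in {0,...,N-1}; receivers of T_i by
   k in {0,...,K i - 1}.  g i k j is the gain g_{r_i^k, t_j} from T_j to R_i^k.
   Power vectors are functions p : nat -> R (only indices < N matter). *)

Definition interference (N : nat) (g : nat -> nat -> nat -> R)
  (p : nat -> R) (i k : nat) : R :=
  fold_right Rplus 0
    (map (fun j => if Nat.eq_dec j i then 0 else g i k j * p j) (seq 0 N)).

Definition sinr_rx (N : nat) (g : nat -> nat -> nat -> R) (sigma2 : R)
  (p : nat -> R) (i k : nat) : R :=
  g i k i * p i / (interference N g p i k + sigma2).

(* SINR of session i : min over k < K i (K i >= 1; the fold is seeded
   with the k = 0 term, so it is exactly the minimum over 0..K i - 1). *)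
Definition sinr_session (N : nat) (K : nat -> nat) (g : nat -> nat -> nat -> R)
  (sigma2 : R) (p : nat -> R) (i : nat) : R :=
  fold_right Rmin (sinr_rx N g sigma2 p i 0)
    (map (sinr_rx N g sigma2 p i) (seq 0 (K i))).

(* Main.v *)
Require Import Defs.
From Stdlib Require Import Reals List Lra Lia.
Open Scope R_scope.

Lemma L_sum_le (l : list nat) (f h : nat -> R) :
  (forall x, In x l -> f x <= h x) ->
  fold_right Rplus 0 (map f l) <= fold_right Rplus 0 (map h l).
Proof.
  induction l as [|a l IH]; simpl; intros H; [lra|].
  assert (f a <= h a) by auto. assert (fold_right Rplus 0 (map f l) <= fold_right Rplus 0 (map h l)) by auto.
  lra.
Qed.

Lemma L_max_le (l : list nat) (f h : nat -> R) a b :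
  a <= b -> (forall x, In x l -> f x <= h x) ->
  fold_right Rmax a (map f l) <= fold_right Rmax b (map h l).
Proof.
  induction l as [|x l IH]; simpl; intros Hab H; [lra|].
  assert (f x <= h x) by auto.
  assert (fold_right Rmax a (map f l) <= fold_right Rmax b (map h l)) by auto.
  apply Rmax_lub; eapply Rle_trans; [|apply Rmax_l| |apply Rmax_r]; eauto.
Qed.

Lemma L_max_ge (l : list nat) (f : nat -> R) a :
  a <= fold_right Rmax a (map f l).
Proof.
  induction l as [|x l IH]; simpl; [lra|].
  eapply Rle_trans; [apply IH|apply Rmax_r].
Qed.

Lemma div_max a x y : 0 <= a -> 0 < x -> 0 < y ->
  Rmin (a / x) (a / y) = a / Rmax x y.
Proof.
  intros Ha Hx Hy. unfold Rmin, Rmax.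
  destruct (Rle_dec x y) as [Hxy|Hxy]; destruct (Rle_dec (a/x) (a/y)) as [H|H]; auto.
  - apply Rle_antisym; auto. unfold Rdiv. apply Rmult_le_compat_l; auto.
    apply Rinv_le_contravar; auto.
  - exfalso; apply H. unfold Rdiv. apply Rmult_le_compat_l; auto.
    apply Rinv_le_contravar; lra.
Qed.

Lemma L_min_div (l : list nat) a c0 (c : nat -> R) :
  0 <= a -> 0 < c0 -> (forall x, In x l -> 0 < c x) ->
  fold_right Rmin (a / c0) (map (fun x => a / c x) l) =
  a / fold_right Rmax c0 (map c l).
Proof.
  intros Ha Hc0. induction l as [|x l IH]; simpl; intros H; auto.
  rewrite IH by auto. apply div_max; auto.
  pose proof (L_max_ge l c c0); lra.
Qed.

Definition cc N g s (p : nat -> R) i k := (interference N g p i k + s) / g i k i.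
Definition MM N (K : nat -> nat) g s p i :=
  fold_right Rmax (cc N g s p i 0) (map (cc N g s p i) (seq 0 (K i))).

Theorem proposition1
  (N : nat) (K : nat -> nat) (g : nat -> nat -> nat -> R) (sigma2 : R)
  (HN : (2 <= N)%nat)
  (HK : forall i, (i < N)%nat -> (1 <= K i)%nat)
  (Hg_nonneg : forall i k j, (i < N)%nat -> (k < K i)%nat -> (j < N)%nat ->
      0 <= g i k j)
  (Hg_direct : forall i k, (i < N)%nat -> (k < K i)%nat -> 0 < g i k i)
  (Hsigma : 0 < sigma2)
  (mu : nat -> R)
  (Hmu : forall i, (i < N)%nat -> 0 <= mu i) :
  (exists pstar : nat -> R,
      (forall i, (i < N)%nat -> 0 <= pstar i) /\
      (forall i, (i < N)%nat -> sinr_session N K g sigma2 pstar i = mu i))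
  <->
  (exists p' : nat -> R,
      (forall i, (i < N)%nat -> 0 <= p' i) /\
      (forall i, (i < N)%nat -> mu i <= sinr_session N K g sigma2 p' i)).
Proof.
  assert (Imono : forall p q i k, (i < N)%nat -> (k < K i)%nat ->
            (forall j, (j < N)%nat -> p j <= q j) ->
            interference N g p i k <= interference N g q i k).
  { intros p q i k Hi Hk H. unfold interference. apply L_sum_le.
    intros j Hj. apply in_seq in Hj. destruct Nat.eq_dec; [lra|].
    apply Rmult_le_compat_l; [apply Hg_nonneg; lia | apply H; lia]. }
  assert (Ipos : forall p i k, (i < N)%nat -> (k < K i)%nat ->
            (forall j, (j < N)%nat -> 0 <= p j) -> 0 <= interference N g p i k).
  { intros p i k Hi Hk H.
    replace 0 with (interference N g (fun _ => 0) i k).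
    - apply Imono; auto.
    - unfold interference. induction (seq 0 N) as [|a l IH]; simpl; auto.
      rewrite IH. destruct Nat.eq_dec; ring. }
  assert (ccpos : forall p i k, (i < N)%nat -> (k < K i)%nat ->
            (forall j, (j < N)%nat -> 0 <= p j) -> 0 < cc N g sigma2 p i k).
  { intros p i k Hi Hk H. unfold cc. apply Rdiv_lt_0_compat; auto.
    pose proof (Ipos p i k Hi Hk H); lra. }
  assert (Mpos : forall p i, (i < N)%nat ->
            (forall j, (j < N)%nat -> 0 <= p j) -> 0 < MM N K g sigma2 p i).
  { intros p i Hi H. unfold MM.
    pose proof (L_max_ge (seq 0 (K i)) (cc N g sigma2 p i) (cc N g sigma2 p i 0)).
    pose proof (ccpos p i 0%nat Hi ltac:(specialize (HK i Hi); lia) H). lra. }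
  assert (Mmono : forall p q i, (i < N)%nat ->
            (forall j, (j < N)%nat -> p j <= q j) ->
            MM N K g sigma2 p i <= MM N K g sigma2 q i).
  { intros p q i Hi H. unfold MM.
    assert (cm : forall k, (k < K i)%nat -> cc N g sigma2 p i k <= cc N g sigma2 q i k).
    { intros k Hk. unfold cc, Rdiv. apply Rmult_le_compat_r.
      - left; apply Rinv_0_lt_compat; auto.
      - pose proof (Imono p q i k Hi Hk H); lra. }
    apply L_max_le.
    - apply cm. specialize (HK i Hi); lia.
    - intros k Hk. apply in_seq in Hk. apply cm; lia. }
  assert (sinrE : forall p i, (i < N)%nat -> (forall j, (j < N)%nat -> 0 <= p j) ->
            sinr_session N K g sigma2 p i = p i / MM N K g sigma2 p i).
  { intros p i Hi H. unfold sinr_session, MM.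
    assert (rx : forall k, (k < K i)%nat ->
              sinr_rx N g sigma2 p i k = p i / cc N g sigma2 p i k).
    { intros k Hk. unfold sinr_rx, cc.
      pose proof (Ipos p i k Hi Hk H). pose proof (Hg_direct i k Hi Hk).
      field. split; lra. }
    assert (HK0 : (0 < K i)%nat) by (specialize (HK i Hi); lia).
    rewrite rx by auto.
    rewrite (map_ext_in _ (fun k => p i / cc N g sigma2 p i k)).
    - apply L_min_div; auto. intros k Hk; apply in_seq in Hk; apply ccpos; auto; lia.
    - intros k Hk; apply in_seq in Hk; apply rx; lia. }
  split.
  { intros [p [H1 H2]]. exists p. split; auto. intros i Hi; rewrite H2 by auto; lra. }
  intros [p' [Hp' Hfeas]].
  set (M := MM N K g sigma2).
  set (S := fun x : nat -> R =>
         (forall i, (i < N)%nat -> 0 <= x i <= p' i) /\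
         (forall i, (N <= i)%nat -> x i = 0) /\
         (forall i, (i < N)%nat -> x i <= mu i * M x i)).
  assert (S0 : S (fun _ => 0)).
  { split; [|split].
    - intros i Hi; split; [lra|auto].
    - auto.
    - intros i Hi. apply Rmult_le_pos; auto. left; apply Mpos; auto; intros; lra. }
  assert (Ebound : forall i, bound (fun r => exists x, S x /\ r = x i)).
  { intros i. exists (Rmax (p' i) 0). intros r [x [[Sa [Sb Sc]] ->]].
    destruct (Nat.lt_ge_cases i N) as [Hi|Hi].
    - specialize (Sa i Hi). pose proof (Rmax_l (p' i) 0); lra.
    - rewrite Sb by auto. apply Rmax_r. }
  assert (Ene : forall i, exists r, (fun r => exists x, S x /\ r = x i) r).
  { intros i. exists 0. exists (fun _ => 0). split; auto. }
  set (u := fun i => proj1_sig (completeness _ (Ebound i) (Ene i))).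
  assert (ulub : forall i, is_lub (fun r => exists x, S x /\ r = x i) (u i)).
  { intros i. exact (proj2_sig (completeness _ (Ebound i) (Ene i))). }
  assert (uge : forall x i, S x -> x i <= u i).
  { intros x i Sx. apply (proj1 (ulub i)). exists x; auto. }
  assert (unn : forall i, 0 <= u i).
  { intros i. apply (uge (fun _ => 0) i S0). }
  assert (ule : forall i, (i < N)%nat -> u i <= p' i).
  { intros i Hi. apply (proj2 (ulub i)). intros r [x [[Sa _] ->]]. apply Sa; auto. }
  assert (uz : forall i, (N <= i)%nat -> u i = 0).
  { intros i Hi. apply Rle_antisym; auto. apply (proj2 (ulub i)).
    intros r [x [[_ [Sb _]] ->]]. rewrite Sb by auto; lra. }
  assert (uF : forall i, (i < N)%nat -> u i <= mu i * M u i).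
  { intros i Hi. apply (proj2 (ulub i)). intros r [x [Sx ->]].
    pose proof Sx as [Sa [Sb Sc]].
    apply Rle_trans with (mu i * M x i); [apply Sc; auto|].
    apply Rmult_le_compat_l; [auto|]. apply Mmono; auto. }
  set (v := fun i => if Compare_dec.lt_dec i N then mu i * M u i else 0).
  assert (unn' : forall j, (j < N)%nat -> 0 <= u j) by auto.
  assert (uv : forall j, (j < N)%nat -> u j <= v j).
  { intros j Hj. unfold v. destruct Compare_dec.lt_dec; [auto|lia]. }
  assert (Sv : S v).
  { split; [|split].
    - intros i Hi. unfold v. destruct Compare_dec.lt_dec; [|lia]. split.
      + apply Rmult_le_pos; auto. left; apply Mpos; auto.
      + apply Rle_trans with (mu i * M p' i).
        * apply Rmult_le_compat_l; [auto|]. apply Mmono; auto.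
        * specialize (Hfeas i Hi). rewrite sinrE in Hfeas by auto.
          pose proof (Mpos p' i Hi Hp'). fold M in Hfeas, H.
          apply Rmult_le_reg_r with (/ M p' i). apply Rinv_0_lt_compat; auto.
          rewrite Rmult_assoc, Rinv_r by lra. rewrite Rmult_1_r. exact Hfeas.
    - intros i Hi. unfold v. destruct Compare_dec.lt_dec; [lia|auto].
    - intros i Hi. unfold v at 1. destruct Compare_dec.lt_dec; [|lia].
      apply Rmult_le_compat_l; [auto|]. apply Mmono; auto. }
  exists u. split; auto. intros i Hi.
  assert (Heq : u i = mu i * M u i).
  { apply Rle_antisym; auto. pose proof (uge v i Sv). unfold v in H.
    destruct Compare_dec.lt_dec; [auto|lia]. }
  rewrite sinrE by auto. fold M. rewrite Heq.
  pose proof (Mpos u i Hi unn'). fold M in H. field. lra.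
Qed.
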